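(* Let $\mathcal{X}\subset\mathbb{R}^d$ be nonempty, closed, convex and compact with diameter $D:=\max_{x,y\in\mathcal{X}}\|x-y\|$. Let $\Phi:\mathcal{X}\to\mathbb{R}$ be differentiable with $L$-Lipschitz gradient, and set $G:=\max_{x\in\mathcal{X}}\|\nabla\Phi(x)\|$, $\Phi_{\max}:=\max_{\mathcal{X}}\Phi$, $\Phi_{\min}:=\min_{\mathcal{X}}\Phi$. Let $F:\mathcal{X}\to\mathbb{R}^d$ satisfy $F(x)=-\nabla\Phi(x)+R(x)$ with $\|R(x)\|\le\varepsilon$ for all $x\in\mathcal{X}$. Run $x_{t+1}=\operatorname{Proj}_{\mathcal{X}}(x_t+\eta g_t)$, $t=0,\dots,T-1$, from $x_0\in\mathcal{X}$ with $0<\eta\le 1/L$, where the directions $g_t\in\mathbb{R}^d$ satisfy $\|g_t-\nabla\Phi(x_t)\|\le\delta_t\le\bar\delta$ for all $t$. Let $\widetilde{\mathcal{G}}_\eta(x_t):=\frac1\eta(x_{t+1}-x_t)$, pick $\hat t\in\arg\min_{0\le t\le T-1}\|\widetilde{\mathcal{G}}_\eta(x_t)\|$ and set $\hat x_T:=x_{\hat t}$. Then $$\operatorname{Gap}(\hat x_T)\le \bigl(D+\eta(G+\bar\delta)\bigr)\sqrt{\frac{4(\Phi_{\max}-\Phi_{\min})}{T\eta}+4\bar\delta^2}+D(\varepsilon+\bar\delta).$$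
   Context: For $\bar x\in\mathcal{X}$, the duality gap of $F$ is $\operatorname{Gap}(\bar x):=\max_{x\in\mathcal{X}}\langle F(\bar x),\bar x-x\rangle$ with the Euclidean inner product. $\operatorname{Proj}_{\mathcal{X}}$ is Euclidean projection onto $\mathcal{X}$. *)

(* Defs.v *)
From HB Require Import structures.
From mathcomp Require Import all_boot all_order all_algebra.
From mathcomp Require Import all_classical all_reals all_analysis.
Set Implicit Arguments. Unset Strict Implicit. Unset Printing Implicit Defensive.
Import Order.TTheory GRing.Theory Num.Theory.
Import numFieldNormedType.Exports.
Local Open Scope classical_set_scope.
Local Open Scope ring_scope.

Definition dotv {R : realType} {d : nat} (u v : 'rV[R]_d) : R := (u *m v^T) 0 0.
Definition enorm {R : realType} {d : nat} (u : 'rV[R]_d) : R := Num.sqrt (dotv u u).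

Definition convex_vset {R : realType} {d : nat} (X : set 'rV[R]_d) : Prop :=
  forall x y (l : R), X x -> X y -> 0 <= l -> l <= 1 -> X (l *: x + (1 - l) *: y).

Definition is_gradient_at {R : realType} {d : nat} (Phi : 'rV[R]_d -> R)
  (gx : 'rV[R]_d) (x : 'rV[R]_d) : Prop :=
  differentiable Phi x /\ forall h : 'rV[R]_d, 'd Phi x h = dotv gx h.

Definition is_proj {R : realType} {d : nat} (X : set 'rV[R]_d) (z p : 'rV[R]_d) : Prop :=
  X p /\ forall y, X y -> enorm (z - p) <= enorm (z - y).

Definition Gap {R : realType} {d : nat} (X : set 'rV[R]_d) (F : 'rV[R]_d -> 'rV[R]_d)
  (xb : 'rV[R]_d) : R :=
  sup [set dotv (F xb) (xb - x) | x in X].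

(* Main.v *)
Require Import Defs.
From HB Require Import structures.
From mathcomp Require Import all_boot all_order all_algebra.
From mathcomp Require Import all_classical all_reals all_analysis.
From mathcomp Require Import ring lra.
Import Order.TTheory GRing.Theory Num.Theory.
Import numFieldNormedType.Exports.
Local Open Scope classical_set_scope.
Local Open Scope ring_scope.

Section Dot.
Context {R : realType} {d : nat}.
Implicit Types u v w : 'rV[R]_d.

Lemma dotvE u v : dotv u v = \sum_i u 0 i * v 0 i.
Proof. by rewrite /dotv !mxE; apply: eq_bigr => i _; rewrite mxE. Qed.

Lemma dotvC u v : dotv u v = dotv v u.
Proof. by rewrite !dotvE; apply: eq_bigr => i _; rewrite mulrC. Qed.

Lemma dotvDl u w v : dotv (u + w) v = dotv u v + dotv w v.
Proof. by rewrite !dotvE -big_split; apply: eq_bigr => i _; rewrite mxE mulrDl. Qed.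

Lemma dotvBl u w v : dotv (u - w) v = dotv u v - dotv w v.
Proof. by rewrite !dotvE -sumrB; apply: eq_bigr => i _; rewrite !mxE mulrBl. Qed.

Lemma dotvZl a u v : dotv (a *: u) v = a * dotv u v.
Proof. by rewrite !dotvE mulr_sumr; apply: eq_bigr => i _; rewrite mxE mulrA. Qed.

Lemma dotvDr u w v : dotv v (u + w) = dotv v u + dotv v w.
Proof. by rewrite dotvC dotvDl !(dotvC v). Qed.

Lemma dotvBr u w v : dotv v (u - w) = dotv v u - dotv v w.
Proof. by rewrite dotvC dotvBl !(dotvC v). Qed.

Lemma dotvZr a u v : dotv v (a *: u) = a * dotv v u.
Proof. by rewrite dotvC dotvZl dotvC. Qed.

Lemma dotvNl u v : dotv (- u) v = - dotv u v.
Proof. by rewrite -scaleN1r dotvZl mulN1r. Qed.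

Lemma dotvNr u v : dotv v (- u) = - dotv v u.
Proof. by rewrite dotvC dotvNl dotvC. Qed.

Lemma dotv_ge0 u : 0 <= dotv u u.
Proof. by rewrite dotvE; apply: sumr_ge0 => i _; rewrite -expr2 sqr_ge0. Qed.

Lemma enorm_ge0 u : 0 <= enorm u.
Proof. exact: sqrtr_ge0. Qed.

Lemma enorm_sq u : enorm u ^+ 2 = dotv u u.
Proof. by rewrite sqr_sqrtr // dotv_ge0. Qed.

Lemma enormZ a u : enorm (a *: u) = `|a| * enorm u.
Proof.
by rewrite /enorm dotvZl dotvZr mulrA sqrtrM ?sqr_ge0 // -expr2 sqrtr_sqr.
Qed.

Lemma enormN u : enorm (- u) = enorm u.
Proof. by rewrite /enorm dotvNl dotvNr opprK. Qed.

Lemma dotv0_eq0 v : dotv v v = 0 -> forall u, dotv u v = 0.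
Proof.
rewrite dotvE => /eqP; rewrite psumr_eq0 => [/allP H u|i _]; last first.
  by rewrite -expr2 sqr_ge0.
rewrite dotvE big1 // => i _.
have /H : i \in index_enum 'I_d by rewrite mem_index_enum.
by rewrite /= mulf_eq0 orbb => /eqP ->; rewrite mulr0.
Qed.

Lemma cauchy_schwarz u v : dotv u v <= enorm u * enorm v.
Proof.
have [B0|Bp] := lerP (dotv u v) 0.
  by apply: le_trans B0 _; rewrite mulr_ge0 // enorm_ge0.
have C0 := dotv_ge0 v.
have [Ceq|Cp] := eqVneq (dotv v v) 0.
  by move: Bp; rewrite (dotv0_eq0 _ Ceq u) ltxx.
have Cpos : 0 < dotv v v by rewrite lt_def Cp.
have key := dotv_ge0 (u - (dotv u v / dotv v v) *: v).
rewrite !(dotvBl, dotvBr, dotvZl, dotvZr) (dotvC v u) in key.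
have HB : dotv u v ^+ 2 <= dotv u u * dotv v v.
  move: key Cpos; move: (dotv u u) (dotv u v) (dotv v v) => A B C key Cpos.
  have: 0 <= (A - B / C * B - B / C * (B - B / C * C)) * C by rewrite mulr_ge0 // ltW.
  have -> : (A - B / C * B - B / C * (B - B / C * C)) * C = A * C - B ^+ 2.
    by field; rewrite gt_eqF.
  by rewrite subr_ge0.
rewrite /enorm -sqrtrM ?dotv_ge0 //.
rewrite -[X in X <= _](@ger0_norm _ (dotv u v)); last exact: ltW.
rewrite -sqrtr_sqr.
by rewrite ler_sqrt // mulr_ge0 // dotv_ge0.
Qed.

End Dot.
Lemma proj_vi {R : realType} {d : nat} (X : set 'rV[R]_d) y p z :
  convex_vset X -> is_proj X y p -> X z -> dotv (y - p) (z - p) <= 0.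
Proof.
move=> cX [Xp pmin] Xz.
set a := dotv (y - p) (z - p); set b := dotv (z - p) (z - p).
have b0 : 0 <= b := dotv_ge0 _.
have H l : 0 < l -> l <= 1 -> 2 * l * a <= l ^+ 2 * b.
  move=> l0 l1.
  have Xq : X (l *: z + (1 - l) *: p) by apply: cX => //; exact: ltW.
  have := pmin _ Xq; rewrite /enorm ler_sqrt ?dotv_ge0 //.
  have -> : y - (l *: z + (1 - l) *: p) = (y - p) - l *: (z - p).
    by apply/rowP => i; rewrite !mxE; ring.
  rewrite /a /b !(dotvBl, dotvBr, dotvZl, dotvZr) (dotvC p y) (dotvC z y) (dotvC z p).
  move=> h; lra.
rewrite leNgt; apply/negP => a0.
have l0 : 0 < a / (a + b) by rewrite divr_gt0 // ltr_wpDr.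
have l1 : a / (a + b) <= 1 by rewrite ler_pdivrMr ?ltr_wpDr // mul1r lerDl.
have := H _ l0 l1.
have ab0 : 0 < a + b by rewrite ltr_wpDr.
have hl : a / (a + b) * (a + b) = a by field; rewrite gt_eqF.
move: l0 hl; set l := a / (a + b) => l0 hl h.
have : 0 < l * a by rewrite mulr_gt0.
nra.
Qed.
Lemma line_is_derive {R : realType} {d : nat} (Phi : 'rV[R]_d -> R) gz (x v : 'rV[R]_d) (s : R) :
  is_gradient_at Phi gz (s *: v + x) ->
  is_derive s 1 (fun t : R => Phi (t *: v + x)) (dotv gz v).
Proof.
move=> [dP dPE].
have hd := @diff_derivable _ _ _ _ _ v dP.
have hE := @deriveE _ _ _ _ _ v dP.
have Eq : (fun h : R => h^-1 *: (((fun t : R => Phi (t *: v + x)) \o shift s) (h *: 1) - Phi (s *: v + x)))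
   = (fun h : R => h^-1 *: ((Phi \o shift (s *: v + x)) (h *: v) - Phi (s *: v + x))).
  apply: funext => h /=; congr (_ *: (Phi _ - _)).
  by apply/rowP => i; rewrite /shift !mxE [h%:A]mulr1; ring.
apply: DeriveDef.
  by rewrite /derivable Eq.
by rewrite /derive Eq -/(derive Phi (s *: v + x) v) hE dPE.
Qed.

Lemma descent {R : realType} {d : nat} (X : set 'rV[R]_d) (Phi : 'rV[R]_d -> R) gradPhi (L : R) x y :
  convex_vset X -> (forall z, X z -> is_gradient_at Phi (gradPhi z) z) ->
  (forall a b, X a -> X b -> enorm (gradPhi a - gradPhi b) <= L * enorm (a - b)) ->
  X x -> X y ->
  Phi x + dotv (gradPhi x) (y - x) - L / 2 * enorm (y - x) ^+ 2 <= Phi y.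
Proof.
move=> cX gP Lip Xx Xy.
set v := y - x; set a := dotv (gradPhi x) v; set c := L / 2 * enorm v ^+ 2.
have Xs s : 0 <= s -> s <= 1 -> X (s *: v + x).
  move=> s0 s1; have -> : s *: v + x = s *: y + (1 - s) *: x.
    by apply/rowP => i; rewrite !mxE; ring.
  exact: cX.
pose k : R -> R := (fun t : R => Phi (t *: v + x)) + (c \*: (@id R ^+ 2) - a \*: @id R).
have dk (s : R) : 0 <= s -> s <= 1 ->
    is_derive s 1 k (dotv (gradPhi (s *: v + x)) v + (c * (2 * s) - a)).
  move=> s0 s1; apply: is_deriveD; first by apply: line_is_derive; apply: gP; exact: Xs.
  apply: is_derive_eq; rewrite ![_%:A]mulr1 -[c *: _]/(c * _) expr1; ring.
  have dk' (s : R) : s \in `[0, 1] -> derivable k s 1.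
  by rewrite in_itv /= => /andP[s0 s1]; case: (dk s s0 s1).
have kmono : k 0 <= k 1.
  apply: (@ger0_derive1_le_cc R k 0 1).
  - by move=> s; rewrite in_itv /= => /andP[s0 s1]; apply: dk'; rewrite in_itv /= !ltW.
  - move=> s; rewrite in_itv /= => /andP[s0 s1].
    case: (dk s (ltW s0) (ltW s1)) => _; rewrite derive1E => ->.
    set gs := gradPhi (s *: v + x).
    have cs := cauchy_schwarz (gradPhi x - gs) v.
    rewrite dotvBl -/a in cs.
    have e1 : enorm (gradPhi x - gs) = enorm (gs - gradPhi x) by rewrite -enormN opprB.
    have Lp : enorm (gradPhi x - gs) <= L * (s * enorm v).
      rewrite e1; have := Lip _ _ (Xs s (ltW s0) (ltW s1)) Xx.
      by rewrite addrK enormZ ger0_norm //; exact: ltW.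
    have := ler_wpM2r (enorm_ge0 v) Lp.
    rewrite /c; move: (enorm_ge0 v) => nv0 h.
    have -> : L / 2 * enorm v ^+ 2 * (2 * s) = L * (s * enorm v) * enorm v by field.
    lra.
  - apply: derivable_within_continuous => s; exact: dk'.
  - by rewrite in_itv /= lexx ler01.
  - by rewrite in_itv /= lexx ler01.
  - exact: ler01.
have k0 : k 0 = Phi (0 *: v + x) + (c * (0 ^+ 2) - a * 0) by [].
have k1 : k 1 = Phi (1 *: v + x) + (c * (1 ^+ 2) - a * 1) by [].
move: kmono; rewrite k0 k1 scale0r add0r scale1r /v subrK expr1n expr0n /= !mulr0 !mulr1.
lra.
Qed.
Theorem theorem6p8 (R : realType) (d : nat) (X : set 'rV[R]_d)
  (Phi : 'rV[R]_d -> R) (gradPhi : 'rV[R]_d -> 'rV[R]_d)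
  (F Rr : 'rV[R]_d -> 'rV[R]_d)
  (L D G Phimax Phimin eps eta dbar : R) (T : nat)
  (xs g : nat -> 'rV[R]_d) (delta : nat -> R) :
  (exists x, X x) -> closed X -> convex_vset X -> compact X ->
  (forall x y, X x -> X y -> enorm (x - y) <= D) ->
  (exists x y, X x /\ X y /\ enorm (x - y) = D) ->
  (forall x, X x -> is_gradient_at Phi (gradPhi x) x) ->
  0 < L ->
  (forall x y, X x -> X y -> enorm (gradPhi x - gradPhi y) <= L * enorm (x - y)) ->
  (forall x, X x -> enorm (gradPhi x) <= G) ->
  (exists x, X x /\ enorm (gradPhi x) = G) ->
  (forall x, X x -> Phi x <= Phimax) -> (exists x, X x /\ Phi x = Phimax) ->
  (forall x, X x -> Phimin <= Phi x) -> (exists x, X x /\ Phi x = Phimin) ->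
  (forall x, X x -> F x = - gradPhi x + Rr x) ->
  (forall x, X x -> enorm (Rr x) <= eps) ->
  (0 < T)%N ->
  X (xs 0%N) ->
  0 < eta -> eta <= L^-1 ->
  (forall t, (t < T)%N -> is_proj X (xs t + eta *: g t) (xs t.+1)) ->
  (forall t, (t < T)%N ->
     enorm (g t - gradPhi (xs t)) <= delta t /\ delta t <= dbar) ->
  forall that : nat, (that < T)%N ->
  (forall t, (t < T)%N ->
     enorm (eta^-1 *: (xs that.+1 - xs that)) <= enorm (eta^-1 *: (xs t.+1 - xs t))) ->
  Gap X F (xs that) <=
    (D + eta * (G + dbar)) *
      Num.sqrt (4 * (Phimax - Phimin) / (T%:R * eta) + 4 * dbar ^+ 2)
    + D * (eps + dbar).
Proof.
move=> [x0 X0] _ cX _ Dub _ gP L0 Lip Gub _ Pmax _ Pmin _ FE Reps T0 X0' eta0 etaL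
  proj gd that thatT thatmin.
set m := fun t => enorm (eta^-1 *: (xs t.+1 - xs t)).
set M := m that.
have Xt t : (t <= T)%N -> X (xs t).
  elim: t => [|t IH] tT //; have tT' : (t < T)%N by [].
  by case: (proj t tT').
have normu t : enorm (xs t.+1 - xs t) = eta * m t.
  rewrite /m enormZ ger0_norm ?invr_ge0 ?ltW // mulrA mulfV ?mul1r //.
  by rewrite gt_eqF.
have m0 t : 0 <= m t by exact: enorm_ge0.
have dbar0 : 0 <= dbar.
  by case: (gd 0%N T0) => h1 h2; apply: le_trans h2; apply: le_trans h1; exact: enorm_ge0.
have D0 : 0 <= D by apply: le_trans (Dub _ _ X0 X0); exact: enorm_ge0.
have G0 : 0 <= G by apply: le_trans (Gub _ X0); exact: enorm_ge0.
have Leta : L * eta <= 1.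
  by rewrite -(mulfV (lt0r_neq0 L0)) ler_pM2l.
have step t : (t < T)%N ->
    eta * m t ^+ 2 / 4 - eta * dbar ^+ 2 <= Phi (xs t.+1) - Phi (xs t).
  move=> tT.
  have Xx := Xt t (ltnW tT); have Xx' := Xt t.+1 tT.
  have [dl dlb] := gd t tT.
  set x := xs t in Xx dl *; set x' := xs t.+1 in Xx' *.
  set u := x' - x.
  have vi := @proj_vi _ _ X _ _ _ cX (proj t tT) Xx.
  have e1 : xs t + eta *: g t - x' = eta *: g t - u by apply/rowP => i; rewrite !mxE; ring.
  have e2 : x - x' = - u by rewrite opprB.
  rewrite -/x e1 e2 dotvNr dotvBl dotvZl oppr_le0 subr_ge0 in vi.
  have uu : dotv u u = (eta * m t) ^+ 2 by rewrite -enorm_sq normu.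
  rewrite uu in vi.
  have h1 : eta * m t ^+ 2 <= dotv (g t) u.
    rewrite -(ler_pM2l eta0); apply: le_trans vi; rewrite le_eqVlt; apply/orP; left.
    by apply/eqP; ring.
  have h2 : dotv (g t - gradPhi x) u <= delta t * (eta * m t).
    apply: le_trans (cauchy_schwarz _ _) _; rewrite normu.
    by apply: ler_wpM2r => //; rewrite mulr_ge0 // ltW.
  have desc := @descent _ _ X Phi gradPhi L _ _ cX gP Lip Xx Xx'.
  rewrite -/u normu in desc.
  have e3 : dotv (gradPhi x) u = dotv (g t) u - dotv (g t - gradPhi x) u.
    by rewrite dotvBl opprB addrC subrK.
  rewrite e3 in desc.
  have h4 : L / 2 * (eta * m t) ^+ 2 <= eta * m t ^+ 2 / 2.
    have : (L * eta) * (eta * m t ^+ 2 / 2) <= 1 * (eta * m t ^+ 2 / 2).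
      by apply: ler_wpM2r => //; rewrite divr_ge0 // mulr_ge0 ?sqr_ge0 // ltW.
    by rewrite mul1r => h; apply: le_trans h; rewrite le_eqVlt; apply/orP; left; apply/eqP; field.
  have dt0 : 0 <= delta t by apply: le_trans dl; exact: enorm_ge0.
  have h5 : delta t * (eta * m t) <= eta * m t ^+ 2 / 4 + eta * dbar ^+ 2.
    have hsq : delta t ^+ 2 <= dbar ^+ 2 by rewrite ler_sqr // nnegrE.
    have hq : 0 <= eta * (m t / 2 - delta t) ^+ 2 by apply: mulr_ge0; [exact: ltW | exact: sqr_ge0].
    have hq2 : eta * delta t ^+ 2 <= eta * dbar ^+ 2 by rewrite ler_pM2l.
    have -> : eta * m t ^+ 2 / 4 = eta * (m t / 2 - delta t) ^+ 2 + delta t * (eta * m t) - eta * delta t ^+ 2 by field.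
    lra.
  lra.
have M0 : 0 <= M := m0 that.
have sum n : (n <= T)%N ->
    n%:R * (eta * M ^+ 2 / 4 - eta * dbar ^+ 2) <= Phi (xs n) - Phi (xs 0%N).
  elim: n => [|n IH] nT; first by rewrite mul0r subrr.
  have nT' : (n < T)%N by [].
  have := IH (ltnW nT'); have := step n nT'.
  have hM : M ^+ 2 <= m n ^+ 2 by rewrite ler_sqr ?nnegrE //; exact: thatmin.
  have : eta * M ^+ 2 <= eta * m n ^+ 2 by rewrite ler_pM2l.
  have -> : n.+1%:R = n%:R + 1 :> R by rewrite -natr1.
  lra.
have hT := sum T (leqnn T).
have XT := Xt T (leqnn T).
have PT := Pmax _ XT; have P0 := Pmin _ X0'.
have Tpos : 0 < T%:R :> R by rewrite ltr0n.
have Teta : 0 < T%:R * eta by rewrite mulr_gt0.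
set S := 4 * (Phimax - Phimin) / (T%:R * eta) + 4 * dbar ^+ 2.
have MS : M ^+ 2 <= S.
  rewrite /S -lerBlDr ler_pdivlMr //.
  have -> : (M ^+ 2 - 4 * dbar ^+ 2) * (T%:R * eta) = 4 * (T%:R * (eta * M ^+ 2 / 4 - eta * dbar ^+ 2)) by field.
  lra.
have MsS : M <= Num.sqrt S.
  rewrite -(ger0_norm M0) -sqrtr_sqr ler_sqrt //.
  by apply: le_trans MS; exact: sqr_ge0.
have Xh := Xt that (ltnW thatT); have Xh' := Xt that.+1 thatT.
have [dl dlb] := gd that thatT.
have dt0 : 0 <= delta that by apply: le_trans dl; exact: enorm_ge0.
set x := xs that in Xh dl *; set x' := xs that.+1 in Xh' *.
set u := x' - x.
set gx := gradPhi x.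
have bound z : X z -> dotv (F x) (x - z) <= (D + eta * (G + dbar)) * M + D * (eps + dbar).
  move=> Xz.
  rewrite FE // dotvDl dotvNl -dotvNr opprB.
  have hR : dotv (Rr x) (x - z) <= eps * D.
    apply: le_trans (cauchy_schwarz _ _) _.
    by apply: ler_pM => //; [exact: enorm_ge0 | exact: enorm_ge0 | exact: Reps | exact: Dub].
  have vi := @proj_vi _ _ X _ _ _ cX (proj that thatT) Xz.
  have e1 : xs that + eta *: g that - x' = eta *: g that - u by apply/rowP => i; rewrite !mxE; ring.
  rewrite -/x e1 dotvBl dotvZl in vi.
  have hu : dotv u (z - x') <= eta * M * D.
    apply: le_trans (cauchy_schwarz _ _) _; rewrite normu -/M.
    apply: ler_wpM2l; first by rewrite mulr_ge0 // ltW.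
    exact: Dub.
  have h1 : dotv (g that) (z - x') <= M * D.
    rewrite -(ler_pM2l eta0) mulrA; lra.
  have h2 : dotv (g that - gx) u <= dbar * (eta * M).
    apply: le_trans (cauchy_schwarz _ _) _; rewrite normu -/M.
    by apply: ler_wpM2r => //; [rewrite mulr_ge0 // ltW | exact: le_trans dlb].
  have h3 : dotv gx u <= G * (eta * M).
    apply: le_trans (cauchy_schwarz _ _) _; rewrite normu -/M.
    by apply: ler_wpM2r => //; [rewrite mulr_ge0 // ltW | exact: Gub].
  have h4 : dotv (gx - g that) (z - x) <= dbar * D.
    apply: le_trans (cauchy_schwarz _ _) _.
    apply: ler_pM => //; [exact: enorm_ge0 | exact: enorm_ge0 | | exact: Dub].
    by rewrite -enormN opprB; exact: le_trans dlb.
  have e2 : dotv gx (z - x) = dotv (gx - g that) (z - x) + dotv (g that) (z - x') + (dotv (g that - gx) u + dotv gx u).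
    have -> : z - x = (z - x') + u by rewrite /u addrA subrK.
    rewrite !(dotvDr, dotvBl); ring.
  rewrite e2; lra.
rewrite /Gap; apply: ge_sup.
  by exists (dotv (F x) (x - x0)), x0.
move=> r [z Xz <-].
apply: le_trans (bound z Xz) _.
apply: lerD => //; apply: ler_wpM2l => //.
by rewrite addr_ge0 // mulr_ge0 ?addr_ge0 // ltW.
Qed.
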